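(* Let $p,q\ge1$, $N\ge1$, and let $\mu$ be a $q\times p$ matrix of measures. Assume that $\mathscr M_N$, $\mathscr M_{N,(b,0)}$ ($b\in\{1,\dots,q\}$) and $\mathscr M_{N,(0,a)}$ ($a\in\{1,\dots,p\}$) admit Gauss--Borel factorizations $\mathscr M_{N,(n,m)}=\mathscr L_{N,(n,m)}^{-1}\mathscr U_{N,(n,m)}^{-1}$ with lower unitriangular $\mathscr L_{N,(n,m)}$, and let $U_b:=\mathscr U_{N,(b,0)}^{-1}\mathscr U_{N,(b-1,0)}$, $L_a:=\mathscr L_{N,(0,a-1)}\mathscr L_{N,(0,a)}^{-1}$ (so that $\mathscr T_N=L_1\cdots L_pU_q\cdots U_1$). Write $U_{b,n}:=(U_b)_{n,n}$ and $L_{a,n}:=(L_a)_{n,n-1}$. Then \[U_{b,n}=-\frac{\tau^B_{b-1,n}\,\tau^B_{b,n+1}}{\tau^B_{b-1,n+1}\,\tau^B_{b,n}},\qquad b\in\{1,\dots,q\},\ n\in\{0,1,\dots,N-b-1\},\] \[L_{a,n+1}=-\frac{\tau^A_{a-1,n+2}\,\tau^A_{a,n}}{\tau^A_{a-1,n+1}\,\tau^A_{a,n+1}},\qquad a\in\{1,\dots,p\},\ n\in\{0,1,\dots,N-a-1\}.\]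
   Context: All matrices are indexed from $0$. Fix integers $p,q\ge1$ and a $q\times p$ matrix $\mu$ of real measures on $\mathbb R$ with finite moments. For $r,n\ge1$, $X^{[n]}_{[r]}(x)$ is the $n\times r$ matrix whose row $k$ is $x^{\lfloor k/r\rfloor}e_{k\bmod r}^\top$ ($e_0,\dots,e_{r-1}$ standard basis of $\mathbb R^r$). Moment matrices: $\mathscr M^{[n,m]}=\int X^{[n]}_{[q]}\,\mathrm d\mu\,(X^{[m]}_{[p]})^\top$, $\mathscr M_n=\mathscr M^{[n,n]}$. Gauss--Borel factorization: $\mathscr M_N=\mathscr L_N^{-1}\mathscr U_N^{-1}$, $\mathscr L_N$ lower unitriangular, $\mathscr U_N$ nonsingular upper triangular. The polynomial matrices are $B^{[N]}(x):=\mathscr L_NX^{[N]}_{[q]}(x)$ ($N\times q$, entry in row $n$ and column $j$ denoted $B^{(j)}_n(x)$, $j=1,\dots,q$) and $A^{[N]}(x):=(X^{[N]}_{[p]}(x))^\top\mathscr U_N$ ($p\times N$, entry in row $i$ and column $n$ denoted $A^{(i)}_n(x)$, $i=1,\dots,p$). $\Lambda^{[n,n+r]}_{[r]}$ is the $n\times(n+r)$ matrix with entries $\delta_{j,i+r}$, and $\mathscr T_N:=\mathscr L_N\Lambda^{[N,N+q]}_{[q]}\mathscr M^{[N+q,N]}\mathscr U_N$. $\mathfrak X_{[r,1]}(x)$ is the $r\times r$ matrix with $(\mathfrak X_{[r,1]})_{i,i+1}=1$ ($0\le i\le r-2$), $(\mathfrak X_{[r,1]})_{r-1,0}=x$, other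 entries $0$; $\mathrm d\mu_{(n,m)}:=\mathfrak X_{[q,1]}^n\,\mathrm d\mu\,(\mathfrak X_{[p,1]}^m)^\top$ with moment matrices $\mathscr M_{N,(n,m)}$ defined as for $\mu$. The $\tau$-determinants are \[\tau^B_{b,n}:=\det\big(B^{(j)}_{n+i}(0)\big)_{0\le i\le b-1,\ 1\le j\le b},\qquad \tau^A_{a,n}:=\det\big(A^{(i)}_{n+a-k}(0)\big)_{1\le i\le a,\ 1\le k\le a},\] (so the row $i$ of the matrix defining $\tau^A_{a,n}$ is $(A^{(i)}_{n+a-1}(0),\dots,A^{(i)}_n(0))$), and $\tau^A_{0,n}=\tau^B_{0,n}=1$. *)

(* Defs.v *)
From HB Require Import structures.
From mathcomp Require Import all_boot all_order all_algebra.
From mathcomp Require Import all_classical all_reals all_analysis.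
Set Implicit Arguments. Unset Strict Implicit. Unset Printing Implicit Defensive.
Import Order.TTheory GRing.Theory Num.Theory.
Import numFieldNormedType.Exports.
Local Open Scope classical_set_scope.
Local Open Scope ring_scope.

Section Defs.
Variable R : realType.

Definition mxn (T : Type) (x0 : T) (m n : nat) (A : 'M[T]_(m, n)) (i j : nat) : T :=
  match @insub nat (fun k => k < m)%N 'I_m i, @insub nat (fun k => k < n)%N 'I_n j with
  | Some i', Some j' => A i' j'
  | _, _ => x0
  end.

Definition Xmx (n r : nat) : 'M[{poly R}]_(n, r) :=
  \matrix_(k < n, j < r) (if (j == (k %% r)%N :> nat) then 'X^(k %/ r)%N else 0).

Definition frakX (r : nat) : 'M[{poly R}]_r :=
  \matrix_(i < r, j < r)
    (if (j == i.+1 :> nat) then 1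
     else if (i == r.-1 :> nat) && (j == 0 :> nat) then 'X else 0).

Definition mxpow (r : nat) (M : 'M[{poly R}]_r) (n : nat) : 'M[{poly R}]_r :=
  iter n (mulmx M) 1%:M.

(* a real measure is represented as mu_pos - mu_neg (Jordan-type decomposition);
   integral of a polynomial f against the (a,b) entry of the matrix of measures *)
Definition Ipoly (p q : nat) (mu_pos mu_neg : 'I_q -> 'I_p -> {measure set R -> \bar R})
  (a : 'I_q) (b : 'I_p) (f : {poly R}) : R :=
  Rintegral (mu_pos a b) setT (fun x => f.[x]) - Rintegral (mu_neg a b) setT (fun x => f.[x]).

Definition finite_moments (p q : nat) (mu_pos mu_neg : 'I_q -> 'I_p -> {measure set R -> \bar R}) :=
  forall (a : 'I_q) (b : 'I_p) (k : nat),
    (mu_pos a b).-integrable setT (fun x => (x ^+ k)%:E) /\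
    (mu_neg a b).-integrable setT (fun x => (x ^+ k)%:E).

(* integration functional of d mu_{(n,m)} = frakX_q^n d mu (frakX_p^m)^T *)
Definition Ishift (p q : nat) (I : 'I_q -> 'I_p -> {poly R} -> R) (n m : nat)
  (i : 'I_q) (j : 'I_p) (f : {poly R}) : R :=
  \sum_(c < q) \sum_(d < p) I c d (f * mxpow (frakX q) n i c * mxpow (frakX p) m j d).

Definition mom_mx (p q : nat) (I : 'I_q -> 'I_p -> {poly R} -> R) (n m : nat) : 'M[R]_(n, m) :=
  \matrix_(k < n, l < m) \sum_(a < q) \sum_(b < p) I a b (Xmx n q k a * Xmx m p l b).

Definition GB_fact (n : nat) (M L U : 'M[R]_n) : Prop :=
  [/\ (forall i j : 'I_n, (i < j)%N -> L i j = 0),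
      (forall i : 'I_n, L i i = 1),
      (forall i j : 'I_n, (j < i)%N -> U i j = 0),
      U \in unitmx &
      M = invmx L *m invmx U].

Definition Bpoly (N q : nat) (L : 'M[R]_N) : 'M[{poly R}]_(N, q) :=
  map_mx polyC L *m Xmx N q.
Definition Apoly (N p : nat) (U : 'M[R]_N) : 'M[{poly R}]_(p, N) :=
  (Xmx N p)^T *m map_mx polyC U.

(* tau^B_{b,n} = det (B^{(j)}_{n+i}(0))_{0<=i<=b-1, 1<=j<=b}  (column j-1 of B) *)
Definition tauB (N q : nat) (L : 'M[R]_N) (b n : nat) : R :=
  \det (\matrix_(i < b, j < b) (mxn 0 (Bpoly q L) (n + i) j).[0]).

(* tau^A_{a,n} = det (A^{(i)}_{n+a-k}(0))_{1<=i<=a, 1<=k<=a}  (row i-1 of A) *)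
Definition tauA (N p : nat) (U : 'M[R]_N) (a n : nat) : R :=
  \det (\matrix_(i < a, k < a) (mxn 0 (Apoly p U) i ((n + a).-1 - k)).[0]).

End Defs.

(* Main.v *)
Require Import Defs.
From HB Require Import structures.
From mathcomp Require Import all_boot all_order all_algebra.
From mathcomp Require Import all_classical all_reals all_analysis.
From mathcomp Require Import fingroup perm zify ring.
Set Implicit Arguments. Unset Strict Implicit. Unset Printing Implicit Defensive.
Import Order.TTheory GRing.Theory Num.Theory.
Local Open Scope ring_scope.

Section Abs.
Variable R : fieldType.

Definition ent m n (A : 'M[R]_(m, n)) (i j : nat) : R := mxn 0 A i j.
Definition mk k (f : nat -> nat -> R) : 'M[R]_k := \matrix_(i < k, j < k) f i j.

Lemma entE m n (A : 'M[R]_(m, n)) (i : 'I_m) (j : 'I_n) : ent A i j = A i j.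
Proof.
rewrite /ent /mxn.
case: insubP => [i' _ /val_inj -> |]; last by rewrite ltn_ord.
by case: insubP => [j' _ /val_inj -> |]; last by rewrite ltn_ord.
Qed.

Lemma ent_out m n (A : 'M[R]_(m, n)) i j : ~~ ((i < m) && (j < n))%N -> ent A i j = 0.
Proof.
rewrite /ent /mxn negb_and => H.
case: insubP => [i' hi _ |]//; case: insubP => [j' hj _|] //.
by rewrite hi hj in H.
Qed.

Lemma ent_mul m n k (A : 'M[R]_(m, n)) (B : 'M[R]_(n, k)) i j :
  ent (A *m B) i j = \sum_(l < n) ent A i l * ent B l j.
Proof.
case: (boolP ((i < m) && (j < k))%N) => [/andP[hi hj] | H].
  have -> : ent (A *m B) i j = ent (A *m B) (Ordinal hi) (Ordinal hj) by [].
  rewrite entE mxE; apply: eq_bigr => l _.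
  by rewrite -(entE A (Ordinal hi)) -(entE B _ (Ordinal hj)).
rewrite ent_out // big1 // => l _.
move: H; rewrite negb_and => /orP[] H.
  by rewrite (@ent_out _ _ A) ?mul0r // (negPf H).
by rewrite (@ent_out _ _ B) ?mulr0 // (negPf H) andbF.
Qed.

Lemma ent_tr m n (A : 'M[R]_(m, n)) i j : ent A^T i j = ent A j i.
Proof.
case: (boolP ((i < n) && (j < m))%N) => [/andP[hi hj] | H].
  have -> : ent A^T i j = ent A^T (Ordinal hi) (Ordinal hj) by [].
  by rewrite entE mxE -(entE A (Ordinal hj)).
by rewrite !ent_out // andbC.
Qed.

Lemma ent1 n i j : (i < n)%N -> (j < n)%N -> ent (1%:M : 'M[R]_n) i j = (i == j)%:R.
Proof.
move=> hi hj; have -> : ent (1%:M : 'M[R]_n) i j = ent (1%:M : 'M[R]_n) (Ordinal hi) (Ordinal hj) by [].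
by rewrite entE mxE.
Qed.

Lemma ent_mk k f i j : (i < k)%N -> (j < k)%N -> ent (mk k f) i j = f i j.
Proof.
move=> hi hj; have -> : ent (mk k f) i j = ent (mk k f) (Ordinal hi) (Ordinal hj) by [].
by rewrite entE mxE.
Qed.

Lemma sum_trunc n k (F : nat -> R) : (k <= n)%N ->
  (forall l, (k <= l < n)%N -> F l = 0) -> \sum_(l < n) F l = \sum_(l < k) F l.
Proof.
move=> hk HF.
rewrite -!(big_mkord xpredT) (big_cat_nat (leq0n k) hk) /=.
have -> : \sum_(k <= l < n) F l = 0.
  by rewrite big_nat_cond big1 // => l /andP[H _]; exact: HF.
by rewrite addr0.
Qed.

Lemma sum_single n (F : 'I_n -> R) j0 : (forall j, j != j0 -> F j = 0) ->
  \sum_j F j = F j0.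
Proof. by move=> H; rewrite (bigD1 j0) //= big1 ?addr0 // => j /H. Qed.

Lemma mk_mul k f g : mk k f *m mk k g = mk k (fun i j => \sum_(l < k) f i l * g l j).
Proof. by apply/matrixP => i j; rewrite !mxE; apply: eq_bigr => l _; rewrite !mxE. Qed.

Lemma mk_ext k f g : (forall i j, (i < k)%N -> (j < k)%N -> f i j = g i j) -> mk k f = mk k g.
Proof. by move=> H; apply/matrixP => i j; rewrite !mxE H. Qed.

Lemma mk_minor k f (i0 j0 : 'I_k.+1) :
  row' i0 (col' j0 (mk k.+1 f)) = mk k (fun i j => f (bump i0 i) (bump j0 j)).
Proof. by apply/matrixP => i j; rewrite !mxE. Qed.

Lemma det_mk_ublock n b h : (forall i j, (i < b)%N -> (j < n)%N -> h (n + i)%N j = 0) ->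
  \det (mk (n + b) h) = \det (mk n h) * \det (mk b (fun i j => h (n + i)%N (n + j)%N)).
Proof.
move=> H.
have -> : mk (n + b) h = block_mx (mk n h) (\matrix_(i < n, j < b) h i (n + j)%N) 0
                          (mk b (fun i j => h (n + i)%N (n + j)%N)).
  apply/matrixP => i j; rewrite -(splitK i) -(splitK j).
  case: (fintype.split i) => i'; case: (fintype.split j) => j';
  by rewrite ?(block_mxEul, block_mxEur, block_mxEdl, block_mxEdr) !mxE //= H.
by rewrite det_ublock.
Qed.

Lemma det_mk_lblock n b h : (forall i j, (i < n)%N -> (j < b)%N -> h i (n + j)%N = 0) ->
  \det (mk (n + b) h) = \det (mk n h) * \det (mk b (fun i j => h (n + i)%N (n + j)%N)).
Proof.
move=> H.
have -> : mk (n + b) h = block_mx (mk n h) 0 (\matrix_(i < b, j < n) h (n + i)%N j)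
                          (mk b (fun i j => h (n + i)%N (n + j)%N)).
  apply/matrixP => i j; rewrite -(splitK i) -(splitK j).
  case: (fintype.split i) => i'; case: (fintype.split j) => j';
  by rewrite ?(block_mxEul, block_mxEur, block_mxEdl, block_mxEdr) !mxE //= H.
by rewrite det_lblock.
Qed.

Lemma det_mk_low k f : (forall i j, (i < j < k)%N -> f i j = 0) ->
  \det (mk k f) = \prod_(i < k) f i i.
Proof.
move=> H; rewrite det_trig; last by apply/is_trig_mxP => i j hij; rewrite mxE H // hij ltn_ord.
by apply: eq_bigr => i _; rewrite mxE.
Qed.

Lemma det_mk_up k f : (forall i j, (j < i < k)%N -> f i j = 0) ->
  \det (mk k f) = \prod_(i < k) f i i.
Proof.
move=> H; rewrite -det_tr.
have -> : (mk k f)^T = mk k (fun i j => f j i) by apply/matrixP => i j; rewrite !mxE.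
by apply: det_mk_low => i j hij; apply: H.
Qed.


Lemma bumpS_eq b j i : (bump b j == b + i.+1)%N = (j == b + i)%N.
Proof. by rewrite /bump; case: (leqP b j) => h /=; apply/eqP/eqP; lia. Qed.

Lemma S1 b : forall n g, (forall i j, (i < n)%N -> g i j = (j == b + i)%N%:R) ->
  \det (mk (n + b) g) = (-1) ^+ (n * b) * \det (mk b (fun i j => g (n + i)%N j)).
Proof.
elim=> [|n IH] g Hg; first by rewrite mul0n expr0 mul1r.
have hb : (b < n.+1 + b)%N by lia.
rewrite (expand_det_row _ ord0) (sum_single (j0 := Ordinal hb)); last first.
  move=> j hj; rewrite mxE Hg // addn0.
  have -> : (j == b :> nat) = false by apply/negP => /eqP h; case/eqP: hj; apply: val_inj.
  by rewrite mul0r.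
rewrite mxE Hg // addn0 eqxx mul1r /cofactor mk_minor /=.
rewrite (IH (fun i j => g (bump 0 i) (bump b j))); last first.
  by move=> i j hi; rewrite Hg // bumpS_eq.
rewrite mulrA -exprD mulSn.
congr (_ * _); apply: congr1; apply: mk_ext => i j hi hj.
by rewrite /bump (leqNgt b j) hj.
Qed.

Lemma S2 n : forall c g, (forall r j, (r < c)%N -> g (n + r)%N j = (j == r)%N%:R) ->
  \det (mk (c + n) g) = (-1) ^+ (n * c) * \det (mk n (fun i j => g i (c + j)%N)).
Proof.
elim=> [|c IH] g Hg; first by rewrite muln0 expr0 mul1r.
have hn : (n < c.+1 + n)%N by lia.
have Hg0 : forall j, g n j = (j == 0%N)%:R by move=> j; rewrite -{1}[n]addn0 Hg.
rewrite (expand_det_row _ (Ordinal hn)) (sum_single (j0 := ord0)); last first.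
  move=> j hj; rewrite mxE /= Hg0.
  have -> : (j == 0%N :> nat) = false by apply/negP => /eqP h; case/eqP: hj; apply: val_inj.
  by rewrite mul0r.
rewrite mxE /= Hg0 eqxx mul1r /cofactor mk_minor /=.
rewrite (IH (fun i j => g (bump n i) (bump 0 j))); last first.
  move=> r j hr; have -> : bump n (n + r) = (n + r.+1)%N by rewrite /bump leq_addr; lia.
  by rewrite Hg //.
rewrite mulrA -exprD addn0 mulnS.
congr (_ * _); apply: congr1; apply: mk_ext => i j hi hj.
by rewrite /bump (leqNgt n i) hi /=; congr (g _ _); lia.
Qed.

Definition revp c : 'S_c := perm (@rev_ord_inj c).
Definition rho c : R := \det (perm_mx (revp c)^-1).

Lemma rho_neq0 c : rho c != 0.
Proof. by rewrite /rho det_perm signr_eq0. Qed.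

Lemma det_rev c f : \det (mk c (fun i k => f i (c.-1 - k)%N)) = rho c * \det (mk c f).
Proof.
have -> : mk c (fun i k => f i (c.-1 - k)%N) = col_perm (revp c) (mk c f).
  by apply/matrixP => i j; rewrite !mxE permE /=; congr (f _ _); lia.
by rewrite col_permE det_mulmx mulrC.
Qed.

Lemma diag_mul n (A B : 'M[R]_n) i : (forall l, l != i -> ent A i l * ent B l i = 0) ->
  ent (A *m B) i i = ent A i i * ent B i i.
Proof.
move=> H; case: (ltnP i n) => hi; last by rewrite !ent_out ?mul0r // ltnNge hi.
rewrite ent_mul (sum_single (j0 := Ordinal hi)) // => j hj; apply: H.
by apply/negP => /eqP h; case/eqP: hj; apply: val_inj.
Qed.

Lemma inv_up n (A : 'M[R]_n) : A \in unitmx -> (forall i j, (j < i)%N -> ent A i j = 0) ->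
  forall i j, (j < i)%N -> ent (invmx A) i j = 0.
Proof.
move=> Au Aup.
have Adiag : forall j, (j < n)%N -> ent A j j != 0.
  move=> j hj; move: Au; rewrite unitmxE unitfE -det_tr det_trig; last first.
    by apply/is_trig_mxP => i k hik; rewrite mxE -entE Aup.
  rewrite prodf_seq_neq0 => /allP /(_ (Ordinal hj)) /=; rewrite mem_index_enum mxE -entE.
  by move=> /(_ isT).
have BA : invmx A *m A = 1%:M by rewrite mulVmx.
suff H : forall j i, (j < i)%N -> ent (invmx A) i j = 0 by move=> i j; apply: H.
elim/ltn_ind => j IH i hji.
case: (ltnP i n) => hi; last by rewrite ent_out // negb_and -leqNgt hi.
have hj : (j < n)%N by lia.
have := ent1 hi hj; rewrite -BA (gtn_eqF hji) ent_mul.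
rewrite (@sum_trunc n j.+1 (fun l => ent (invmx A) i l * ent A l j)) //; last first.
  by move=> l /andP[h1 h2]; rewrite Aup ?mulr0.
rewrite big_ord_recr /= big1 ?add0r; last first.
  by move=> l _; rewrite IH ?mul0r //; have := ltn_ord l; lia.
by move/eqP; rewrite mulf_eq0 (negPf (Adiag j hj)) orbF => /eqP.
Qed.

Definition GBf (n : nat) (M L U : 'M[R]_n) : Prop :=
  [/\ (forall i j : 'I_n, (i < j)%N -> L i j = 0),
      (forall i : 'I_n, L i i = 1),
      (forall i j : 'I_n, (j < i)%N -> U i j = 0),
      U \in unitmx &
      M = invmx L *m invmx U].

Section GB.
Variables (N : nat) (M L U : 'M[R]_N).
Hypothesis HG : GBf M L U.
Let HL : forall i j : 'I_N, (i < j)%N -> L i j = 0. Proof. by case: HG. Qed.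
Let HL1 : forall i : 'I_N, L i i = 1. Proof. by case: HG. Qed.
Let HU : forall i j : 'I_N, (j < i)%N -> U i j = 0. Proof. by case: HG. Qed.
Let HUu : U \in unitmx. Proof. by case: HG. Qed.
Let HM : M = invmx L *m invmx U. Proof. by case: HG. Qed.

Lemma Llow i j : (i < j)%N -> ent L i j = 0.
Proof.
move=> hij; case: (boolP ((i < N) && (j < N))%N) => [/andP[hi hj]|h]; last by rewrite ent_out.
have -> : ent L i j = ent L (Ordinal hi) (Ordinal hj) by [].
by rewrite entE HL.
Qed.

Lemma Ldiag i : (i < N)%N -> ent L i i = 1.
Proof. by move=> hi; have -> : ent L i i = ent L (Ordinal hi) (Ordinal hi) by []; rewrite entE HL1. Qed.

Lemma Uup i j : (j < i)%N -> ent U i j = 0.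
Proof.
move=> hij; case: (boolP ((i < N) && (j < N))%N) => [/andP[hi hj]|h]; last by rewrite ent_out.
have -> : ent U i j = ent U (Ordinal hi) (Ordinal hj) by [].
by rewrite entE HU.
Qed.

Lemma Lu : L \in unitmx.
Proof.
rewrite unitmxE det_trig; last by apply/is_trig_mxP => i j; apply: HL.
by rewrite big1 ?unitr1 // => i _; rewrite HL1.
Qed.

Definition V := invmx U.

Lemma Vup i j : (j < i)%N -> ent V i j = 0.
Proof. exact: inv_up HUu Uup i j. Qed.

Lemma LMV : L *m M = V.
Proof. by rewrite HM mulmxA mulmxV ?mul1mx //; exact: Lu. Qed.

Lemma MUL : M *m U = invmx L.
Proof. by rewrite HM -mulmxA mulVmx ?mulmx1. Qed.

Lemma Linvlow i j : (i < j)%N -> ent (invmx L) i j = 0.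
Proof.
move=> hij; rewrite -ent_tr trmx_inv; apply: inv_up => //.
  by rewrite unitmx_tr; exact: Lu.
by move=> a b hab; rewrite ent_tr Llow.
Qed.

Lemma UV i : (i < N)%N -> ent U i i * ent V i i = 1.
Proof.
move=> hi; rewrite -diag_mul /V ?mulmxV ?ent1 ?eqxx //.
move=> l hl; case: (ltngtP l i) => h; first by rewrite Uup ?mul0r.
  by rewrite Vup ?mulr0.
by rewrite h eqxx in hl.
Qed.

Lemma Vne0 i : (i < N)%N -> ent V i i != 0.
Proof. by move=> hi; apply/eqP => h; have := UV hi; rewrite h mulr0 => /eqP; rewrite eq_sym oner_eq0. Qed.

Lemma Une0 i : (i < N)%N -> ent U i i != 0.
Proof. by move=> hi; apply/eqP => h; have := UV hi; rewrite h mul0r => /eqP; rewrite eq_sym oner_eq0. Qed.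

Lemma lead k : (k <= N)%N -> \det (mk k (ent M)) = \prod_(i < k) ent V i i.
Proof.
move=> hk.
have E : mk k (ent V) = mk k (ent L) *m mk k (ent M).
  rewrite mk_mul; apply: mk_ext => i j hi hj.
  rewrite -LMV ent_mul (@sum_trunc N k (fun l => ent L i l * ent M l j)) //.
  by move=> l /andP[h1 h2]; rewrite Llow ?mul0r //; lia.
have := congr1 determinant E; rewrite det_mulmx (det_mk_low (f := ent L)); last first.
  by move=> i j /andP[h _]; rewrite Llow.
rewrite big1 ?mul1r; last by move=> i _; rewrite Ldiag //; have := ltn_ord i; lia.
move=> <-; apply: det_mk_up => i j /andP[h _]; exact: Vup.
Qed.

Lemma tauB_mk n b : (n + b <= N)%N ->
  (-1) ^+ (n * b) * \det (mk b (fun i j => ent L (n + i)%N j)) * \prod_(i < n) ent V i i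
  = \det (mk n (fun i j => ent M (b + i)%N j)).
Proof.
move=> hnb.
pose g i j := if (i < n)%N then (j == b + i)%N%:R else ent L i j.
pose h i j := if (i < n)%N then ent M (b + i)%N j else ent V i j.
have E : mk (n + b) g *m mk (n + b) (ent M) = mk (n + b) h.
  rewrite mk_mul; apply: mk_ext => i j hi hj; rewrite /g /h.
  case: ifP => hin.
    have hbi : (b + i < n + b)%N by lia.
    rewrite (sum_single (j0 := Ordinal hbi)) /= ?eqxx ?mul1r // => l hl.
    have -> : (l == b + i :> nat) = false by apply/negP => /eqP e; case/eqP: hl; apply: val_inj.
    by rewrite mul0r.
  rewrite -LMV ent_mul (@sum_trunc N (n + b) (fun l => ent L i l * ent M l j)) //.
  by move=> l /andP[h1 h2]; rewrite Llow ?mul0r //; lia.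
have := congr1 determinant E; rewrite det_mulmx.
rewrite (S1 (g := g)); last by move=> i j hi; rewrite /g hi.
rewrite det_mk_ublock; last by move=> i j hi hj; rewrite /h ifF ?Vup //; lia.
rewrite lead // big_split_ord /=.
rewrite (det_mk_up (f := fun i j => h (n + i)%N (n + j)%N)); last first.
  by move=> i j /andP[hij _]; rewrite /h ifF ?Vup //; lia.
have Hb : \prod_(i < b) h (n + i)%N (n + i)%N = \prod_(i < b) ent V (n + i)%N (n + i)%N.
  by apply: eq_bigr => i _; rewrite /h ifF //; lia.
rewrite Hb.
have -> : mk b (fun i j => g (n + i)%N j) = mk b (fun i j => ent L (n + i)%N j).
  by apply: mk_ext => i j _ _; rewrite /g ifF //; lia.
have -> : mk n h = mk n (fun i j => ent M (b + i)%N j) by apply: mk_ext => i j hi _; rewrite /h hi.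
have Pb : \prod_(i < b) ent V (n + i)%N (n + i)%N != 0.
  by rewrite prodf_seq_neq0; apply/allP => i _; apply: Vne0; have := ltn_ord i; lia.
move=> HH; apply: (mulIf Pb); rewrite -HH; ring.
Qed.

Lemma tauA_mk n c : (n + c <= N)%N ->
  (-1) ^+ (n * c) * \det (mk n (fun i j => ent M i (c + j)%N)) * \prod_(i < n + c) ent U i i
  = \det (mk c (fun r k => ent U r (n + k)%N)).
Proof.
move=> hnc.
pose g i j := if (i < n)%N then ent M i j else (j == i - n)%N%:R.
pose h i j := if (i < n)%N then ent (invmx L) i j else ent U (i - n)%N j.
have E : mk (n + c) g *m mk (n + c) (ent U) = mk (n + c) h.
  rewrite mk_mul; apply: mk_ext => i j hi hj; rewrite /g /h.
  case: ifP => hin.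
    rewrite -MUL ent_mul (@sum_trunc N (n + c) (fun l => ent M i l * ent U l j)) //.
    by move=> l /andP[h1 h2]; rewrite Uup ?mulr0 //; lia.
  have hbi : (i - n < n + c)%N by lia.
  rewrite (sum_single (j0 := Ordinal hbi)) /= ?eqxx ?mul1r // => l hl.
  have -> : (l == (i - n)%N :> nat) = false by apply/negP => /eqP e; case/eqP: hl; apply: val_inj.
  by rewrite mul0r.
have := congr1 determinant E; rewrite det_mulmx.
have Sg : \det (mk (n + c) g) = (-1) ^+ (n * c) * \det (mk n (fun i j => g i (c + j)%N)).
  rewrite addnC; apply: S2.
  by move=> r j hr; rewrite /g ifF ?addKn //; lia.
rewrite Sg.
rewrite det_mk_lblock; last by move=> i j hi hj; rewrite /h hi Linvlow //; lia.
rewrite (det_mk_up (f := ent U)); last by move=> i j /andP[hij _]; rewrite Uup.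
rewrite (det_mk_low (f := h)); last by move=> i j /andP[hij hj]; rewrite /h (ltn_trans hij hj) Linvlow.
have -> : \prod_(i < n) h i i = 1.
  rewrite big1 // => i _; rewrite /h ltn_ord.
  have hiN : (i < N)%N by have := ltn_ord i; lia.
  have Hc : forall l : nat, l != i -> ent L i l * ent (invmx L) l i = 0.
    move=> l hl; case: (ltngtP l i) => hh; first by rewrite Linvlow ?mulr0.
      by rewrite Llow ?mul0r.
    by rewrite hh eqxx in hl.
  have D := diag_mul Hc; rewrite mulmxV in D; last exact: Lu.
  by rewrite ent1 // eqxx Ldiag // mul1r in D; rewrite -D.
have -> : mk n (fun i j => g i (c + j)%N) = mk n (fun i j => ent M i (c + j)%N).
  by apply: mk_ext => i j hi _; rewrite /g hi.
have -> : mk c (fun i j => h (n + i)%N (n + j)%N) = mk c (fun r k => ent U r (n + k)%N).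
  by apply: mk_ext => i j _ _; rewrite /h ifF ?addKn //; lia.
by rewrite mul1r => <-; ring.
Qed.

End GB.

Lemma Lprod N (Mc Lc Uc Ma La Ua : 'M[R]_N) n :
  GBf Mc Lc Uc -> GBf Ma La Ua -> (n.+1 < N)%N ->
  (forall l k, (k <= n)%N -> ent Ma l k = ent Mc l k.+1) ->
  ent (Lc *m invmx La) n.+1 n = ent (invmx Uc) n.+1 n.+1 * ent Ua n n.
Proof.
move=> Hc Ha hn Hs.
have hn' : (n < N)%N by lia.
have Hk : forall k, (k <= n)%N -> ent (Lc *m Ma) n.+1 k = ent (invmx Uc) n.+1 k.+1.
  move=> k hk; rewrite -[invmx Uc](LMV Hc) !ent_mul; apply: eq_bigr => l _; by rewrite Hs.
rewrite -(MUL Ha) mulmxA ent_mul (sum_single (j0 := Ordinal hn')) /= ?Hk //.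
move=> k hk; case: (ltngtP k n) => hh.
  by rewrite Hk ?(Vup Hc) ?mul0r //; lia.
  by rewrite (Uup Ha) ?mulr0.
by case/eqP: hk; apply: val_inj.
Qed.

Lemma Uprod N (Mb Lb Ub Mc Lc Uc : 'M[R]_N) n :
  GBf Mb Lb Ub -> GBf Mc Lc Uc -> (n < N)%N ->
  ent (invmx Ub *m Uc) n n = ent (invmx Ub) n n / ent (invmx Uc) n n.
Proof.
move=> Hb Hc hn.
rewrite diag_mul; last first.
  move=> l hl; case: (ltngtP l n) => hh; first by rewrite (Vup Hb) ?mul0r.
    by rewrite (Uup Hc) ?mulr0.
  by rewrite hh eqxx in hl.
congr (_ * _); apply: (mulIf (Vne0 Hc hn)); rewrite mulVf ?(Vne0 Hc hn) //.
by rewrite (UV Hc hn).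
Qed.

End Abs.

Lemma sum_single' (V : nmodType) n (F : 'I_n -> V) j0 : (forall j, j != j0 -> F j = 0) ->
  \sum_j F j = F j0.
Proof. by move=> H; rewrite (bigD1 j0) //= big1 ?addr0 // => j /H. Qed.

Section Moments.
Variable R : realType.

Lemma mxnE (T : Type) x0 m n (A : 'M[T]_(m, n)) (i : 'I_m) (j : 'I_n) : mxn x0 A i j = A i j.
Proof.
rewrite /mxn.
case: insubP => [i' _ /val_inj -> |]; last by rewrite ltn_ord.
by case: insubP => [j' _ /val_inj -> |]; last by rewrite ltn_ord.
Qed.

Lemma mxn_out (T : Type) x0 m n (A : 'M[T]_(m, n)) i j : ~~ ((i < m) && (j < n))%N -> mxn x0 A i j = x0.
Proof.
rewrite /mxn negb_and => H.
case: insubP => [i' hi _ |]//; case: insubP => [j' hj _|] //.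
by rewrite hi hj in H.
Qed.

Definition xp r (k : nat) (j : 'I_r) : {poly R} := if (j == (k %% r)%N :> nat) then 'X^(k %/ r)%N else 0.

Lemma frakX_pow r b (a a' : 'I_r) : (mxpow (frakX R r) b) a a' = xp (a + b) a'.
Proof.
elim: b a a' => [|b IH] a a'.
  rewrite /mxpow /= mxE /xp addn0 modn_small ?divn_small // expr0.
  by rewrite -[a == a']/(a == a' :> nat) eq_sym; case: (_ == _).
have -> : mxpow (frakX R r) b.+1 = frakX R r *m mxpow (frakX R r) b by [].
rewrite mxE.
case: (ltnP a.+1 r) => ha.
  rewrite (sum_single' (j0 := Ordinal ha)) /=; last first.
    move=> c hc; rewrite mxE.
    have -> : (c == a.+1 :> nat) = false by apply/negP => /eqP e; case/eqP: hc; apply: val_inj.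
    have -> : (a == r.-1 :> nat) = false by apply/negP => /eqP e; lia.
    by rewrite mul0r.
  by rewrite mxE eqxx mul1r IH /= addSnnS.
have r0 : (0 < r)%N by have := ltn_ord a; lia.
have har : (a = r.-1 :> nat) by have := ltn_ord a; lia.
rewrite (sum_single' (j0 := Ordinal r0)) /=; last first.
  move=> c hc; rewrite mxE.
  have -> : (c == a.+1 :> nat) = false by apply/negP => /eqP e; have := ltn_ord c; lia.
  have -> : (c == 0%N :> nat) = false by apply/negP => /eqP e; case/eqP: hc; apply: val_inj.
  by rewrite andbF mul0r.
rewrite mxE IH /=.

rewrite har eqxx /= /xp.
have -> : (r.-1 + b.+1 = r + b)%N by lia.
have E : ((r + b) %/ r = (b %/ r).+1)%N by rewrite -{1}[r]mul1n divnMDl.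
rewrite modnDl E add0n.
by case: ifP => _; rewrite ?mulr0 // -exprS.
Qed.

Lemma Bpoly0 N q (L : 'M[R]_N) m j : (j < q)%N -> (j < N)%N ->
  (mxn 0 (Bpoly q L) m j).[0] = ent L m j.
Proof.
move=> hjq hjN; have q0 : (0 < q)%N by lia.
case: (ltnP m N) => hm; last first.
  by rewrite (@mxn_out _ 0 _ _ (Bpoly q L)) ?horner0 ?ent_out // negb_and -leqNgt hm.
have -> : mxn 0 (Bpoly q L) m j = mxn 0 (Bpoly q L) (Ordinal hm) (Ordinal hjq) by [].
have -> : ent L m j = ent L (Ordinal hm) (Ordinal hjN) by [].
rewrite mxnE entE /Bpoly mxE horner_sum (sum_single (j0 := Ordinal hjN)); last first.
  move=> k hk; rewrite !mxE hornerCM /=.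
  case: eqP => e; last by rewrite horner0 mulr0.
  rewrite hornerXn expr0n.
  have -> : (k %/ q == 0)%N = false.
    apply/negP => /eqP e2; case/eqP: hk; apply: val_inj => /=.
    by rewrite e modn_small // ltnNge -(divn_gt0 _ q0) e2.
  by rewrite mulr0.
by rewrite !mxE hornerCM /= modn_small // eqxx divn_small // hornerXn expr0 mulr1.
Qed.

Lemma Apoly0 N p (U : 'M[R]_N) i m : (i < p)%N -> (i < N)%N ->
  (mxn 0 (Apoly p U) i m).[0] = ent U i m.
Proof.
move=> hip hiN; have p0 : (0 < p)%N by lia.
case: (ltnP m N) => hm; last first.
  by rewrite (@mxn_out _ 0 _ _ (Apoly p U)) ?horner0 ?ent_out // negb_and -(leqNgt N m) hm orbT.
have -> : mxn 0 (Apoly p U) i m = mxn 0 (Apoly p U) (Ordinal hip) (Ordinal hm) by [].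
have -> : ent U i m = ent U (Ordinal hiN) (Ordinal hm) by [].
rewrite mxnE entE /Apoly mxE horner_sum (sum_single (j0 := Ordinal hiN)); last first.
  move=> k hk; rewrite !mxE hornerM hornerC /=.
  case: eqP => e; last by rewrite horner0 mul0r.
  rewrite hornerXn expr0n.
  have -> : (k %/ p == 0)%N = false.
    apply/negP => /eqP e2; case/eqP: hk; apply: val_inj => /=.
    by rewrite e modn_small // ltnNge -(divn_gt0 _ p0) e2.
  by rewrite mul0r.
by rewrite !mxE hornerM hornerC /= modn_small // eqxx divn_small // hornerXn expr0 mul1r.
Qed.

Lemma tauB_conv N q (L : 'M[R]_N) b n : (b <= q)%N -> (b <= N)%N ->
  tauB q L b n = \det (mk b (fun i j => ent L (n + i)%N j)).
Proof.
move=> hbq hbN; rewrite /tauB; congr (\det _); apply/matrixP => i j; rewrite !mxE.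
by rewrite Bpoly0 //; have := ltn_ord j; lia.
Qed.

Lemma tauA_conv N p (U : 'M[R]_N) a n : (a <= p)%N -> (a <= N)%N ->
  tauA p U a n = rho R a * \det (mk a (fun r k => ent U r (n + k)%N)).
Proof.
move=> hap haN; rewrite /tauA -det_rev; congr (\det _); apply/matrixP => i k; rewrite !mxE.
rewrite Apoly0; try by have := ltn_ord i; lia.
by congr (ent _ _ _); have := ltn_ord k; lia.
Qed.

Lemma Ipoly0 (p q : nat) (mu_pos mu_neg : 'I_q -> 'I_p -> {measure set R -> \bar R}) a c :
  Ipoly mu_pos mu_neg a c 0 = 0.
Proof.
rewrite /Ipoly.
have -> : (fun x : R => (0 : {poly R}).[x]) = fun _ => 0 by apply: funext => x; rewrite horner0.
by rewrite !Rintegral_cst // !mul0r subrr.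
Qed.

Variables (p q : nat) (I : 'I_q -> 'I_p -> {poly R} -> R).
Hypothesis (HI : forall a c, I a c 0 = 0) (p0 : (0 < p)%N) (q0 : (0 < q)%N).

Lemma mom_entry (J : 'I_q -> 'I_p -> {poly R} -> R) N (k l : 'I_N) :
  mom_mx J N N k l = \sum_(a < q) \sum_(c < p) J a c (xp k a * xp l c).
Proof. by rewrite mxE; apply: eq_bigr => a _; apply: eq_bigr => c _; rewrite !mxE. Qed.

Lemma shift_row b i j :
  \sum_(a < q) \sum_(c < p) Ishift I b 0 a c (xp i a * xp j c)
  = \sum_(a < q) \sum_(c < p) I a c (xp (b + i) a * xp j c).
Proof.
pose a0 : 'I_q := Ordinal (ltn_pmod i q0).
pose c0 : 'I_p := Ordinal (ltn_pmod j p0).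
rewrite (sum_single' (j0 := a0)); last first.
  move=> a ha; apply: big1 => c _; rewrite /Ishift; apply: big1 => a' _; apply: big1 => d _.
  rewrite /xp; have -> : (a == (i %% q)%N :> nat) = false.
    by apply/negP => /eqP e; case/eqP: ha; apply: val_inj.
  by rewrite !mul0r HI.
rewrite (sum_single' (j0 := c0)); last first.
  move=> c hc; rewrite /Ishift; apply: big1 => a' _; apply: big1 => d _.
  rewrite /xp; have -> : (c == (j %% p)%N :> nat) = false.
    by apply/negP => /eqP e; case/eqP: hc; apply: val_inj.
  by rewrite !mulr0 !mul0r HI.
rewrite /Ishift; apply: eq_bigr => a' _; apply: eq_bigr => d _; congr (I _ _ _).
rewrite !frakX_pow /xp /= !eqxx addn0 modn_mod (divn_small (ltn_pmod j p0)) expr0.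
have E1 : ((b + i) %% q = (i %% q + b) %% q)%N by rewrite modnDml addnC.
have E2 : ((b + i) %/ q = i %/ q + (i %% q + b) %/ q)%N.
  have -> : (b + i = i %/ q * q + (i %% q + b))%N by rewrite {1}(divn_eq i q); lia.
  by rewrite divnMDl.
rewrite E1 E2; case: eqP => _; case: eqP => _; rewrite ?mulr0 ?mul0r //.
by rewrite mulr1 exprD; ring.
Qed.

Lemma shift_col a i j :
  \sum_(x < q) \sum_(y < p) Ishift I 0 a x y (xp i x * xp j y)
  = \sum_(x < q) \sum_(y < p) I x y (xp i x * xp (a + j) y).
Proof.
pose a0 : 'I_q := Ordinal (ltn_pmod i q0).
pose c0 : 'I_p := Ordinal (ltn_pmod j p0).
rewrite (sum_single' (j0 := a0)); last first.
  move=> x ha; apply: big1 => c _; rewrite /Ishift; apply: big1 => a' _; apply: big1 => d _.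
  rewrite /xp; have -> : (x == (i %% q)%N :> nat) = false.
    by apply/negP => /eqP e; case/eqP: ha; apply: val_inj.
  by rewrite !mul0r HI.
rewrite (sum_single' (j0 := c0)); last first.
  move=> c hc; rewrite /Ishift; apply: big1 => a' _; apply: big1 => d _.
  rewrite /xp; have -> : (c == (j %% p)%N :> nat) = false.
    by apply/negP => /eqP e; case/eqP: hc; apply: val_inj.
  by rewrite !mulr0 !mul0r HI.
rewrite /Ishift; apply: eq_bigr => a' _; apply: eq_bigr => d _; congr (I _ _ _).
rewrite !frakX_pow /xp /= !eqxx addn0 modn_mod (divn_small (ltn_pmod i q0)) expr0.
have E1 : ((a + j) %% p = (j %% p + a) %% p)%N by rewrite modnDml addnC.
have E2 : ((a + j) %/ p = j %/ p + (j %% p + a) %/ p)%N.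
  have -> : (a + j = j %/ p * p + (j %% p + a))%N by rewrite {1}(divn_eq j p); lia.
  by rewrite divnMDl.
rewrite E1 E2; case: eqP => _; case: eqP => _; rewrite ?mulr0 ?mul0r //.
by rewrite mulr1 exprD; ring.
Qed.

Lemma mom_row N b i j : (b + i < N)%N ->
  ent (mom_mx (Ishift I b 0) N N) i j = ent (mom_mx I N N) (b + i) j.
Proof.
move=> hbi; case: (ltnP j N) => hj; last by rewrite !ent_out // negb_and -!leqNgt hj orbT.
have hi : (i < N)%N by lia.
have -> : ent (mom_mx (Ishift I b 0) N N) i j = ent (mom_mx (Ishift I b 0) N N) (Ordinal hi) (Ordinal hj) by [].
have -> : ent (mom_mx I N N) (b + i) j = ent (mom_mx I N N) (Ordinal hbi) (Ordinal hj) by [].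
by rewrite !entE !mom_entry shift_row.
Qed.

Lemma mom_col N a i j : (a + j < N)%N ->
  ent (mom_mx (Ishift I 0 a) N N) i j = ent (mom_mx I N N) i (a + j).
Proof.
move=> haj; case: (ltnP i N) => hi; last by rewrite !ent_out // negb_and -!leqNgt hi.
have hj : (j < N)%N by lia.
have -> : ent (mom_mx (Ishift I 0 a) N N) i j = ent (mom_mx (Ishift I 0 a) N N) (Ordinal hi) (Ordinal hj) by [].
have -> : ent (mom_mx I N N) i (a + j) = ent (mom_mx I N N) (Ordinal hi) (Ordinal haj) by [].
by rewrite !entE !mom_entry shift_col.
Qed.

End Moments.

Unset Implicit Arguments.
Import numFieldNormedType.Exports.

Lemma solve_eq (R : fieldType) (x t y z : R) : x != 0 -> y != 0 -> x * t * y = z -> t = z / (x * y).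
Proof. by move=> hx hy <-; field; apply/andP. Qed.

Lemma prod_neq0 (R : fieldType) n (f : nat -> R) : (forall i, (i < n)%N -> f i != 0) ->
  \prod_(i < n) f i != 0.
Proof. by move=> H; rewrite prodf_seq_neq0; apply/allP => i _; apply: H. Qed.

Theorem mainTheorem2 (R : realType) (p q N : nat)
  (mu_pos mu_neg : 'I_q -> 'I_p -> {measure set R -> \bar R}) :
  (0 < p)%N -> (0 < q)%N -> (0 < N)%N ->
  finite_moments mu_pos mu_neg ->
  forall (LN UN : 'M[R]_N) (LB UB LA UA : nat -> 'M[R]_N),
  GB_fact (mom_mx (Ipoly mu_pos mu_neg) N N) LN UN ->
  (forall b : nat, (1 <= b <= q)%N ->
     GB_fact (mom_mx (Ishift (Ipoly mu_pos mu_neg) b 0) N N) (LB b) (UB b)) ->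
  (forall a : nat, (1 <= a <= p)%N ->
     GB_fact (mom_mx (Ishift (Ipoly mu_pos mu_neg) 0 a) N N) (LA a) (UA a)) ->
  let Uf := fun b : nat => if b is 0 then UN else UB b in
  let Lf := fun a : nat => if a is 0 then LN else LA a in
  (forall b n : nat, (1 <= b <= q)%N -> (n + b < N)%N ->
     mxn 0 (invmx (Uf b) *m Uf b.-1) n n =
     - (tauB q LN b.-1 n * tauB q LN b n.+1) / (tauB q LN b.-1 n.+1 * tauB q LN b n)) /\
  (forall a n : nat, (1 <= a <= p)%N -> (n + a < N)%N ->
     mxn 0 (Lf a.-1 *m invmx (Lf a)) n.+1 n =
     - (tauA p UN a.-1 n.+2 * tauA p UN a n) / (tauA p UN a.-1 n.+1 * tauA p UN a n.+1)).
Proof.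
move=> p0 q0 N0 _ LN UN LB UB LA UA HG0 HB HA Uf Lf.
set I := Ipoly mu_pos mu_neg.
set M := mom_mx I N N.
have HI : forall a c, I a c 0 = 0 by move=> a c; exact: Ipoly0.
have G0 : GBf M LN UN := HG0.
pose Mr c := if c is 0 then M else mom_mx (Ishift I c 0) N N.
pose Lr c := if c is 0 then LN else LB c.
pose Mc c := if c is 0 then M else mom_mx (Ishift I 0 c) N N.
pose Uc c := if c is 0 then UN else UA c.
have GR : forall c, (c <= q)%N -> GBf (Mr c) (Lr c) (Uf c).
  case => [|c] hc //; have h : (1 <= c.+1 <= q)%N by lia.
  exact: (HB c.+1 h).
have GC : forall c, (c <= p)%N -> GBf (Mc c) (Lf c) (Uc c).
  case => [|c] hc //; have h : (1 <= c.+1 <= p)%N by lia.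
  exact: (HA c.+1 h).
have LR : forall c n, (c <= q)%N -> (n + c <= N)%N ->
    \det (mk n (fun i j => ent M (c + i)%N j)) = \prod_(i < n) ent (invmx (Uf c)) i i.
  move=> c n hc hn; rewrite -(lead (GR c hc)); last by lia.
  congr (\det _); apply: mk_ext => i j hi hj; case: c hc hn => [|c] hc hn //=.
  by rewrite (mom_row HI p0 q0) //; lia.
have LC : forall c n, (c <= p)%N -> (n + c <= N)%N ->
    \det (mk n (fun i j => ent M i (c + j)%N)) = \prod_(i < n) ent (invmx (Uc c)) i i.
  move=> c n hc hn; rewrite -(lead (GC c hc)); last by lia.
  congr (\det _); apply: mk_ext => i j hi hj; case: c hc hn => [|c] hc hn //=.
  by rewrite (mom_col HI p0 q0) //; lia.
have sg : forall k, ((-1) ^+ k : R) != 0 by move=> k; rewrite signr_eq0.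
split.
- move=> b n /andP[hb1 hbq] hnb.
  have TB : forall c m, (c <= q)%N -> (m + c <= N)%N ->
      tauB q LN c m = \prod_(i < m) ent (invmx (Uf c)) i i /
                      ((-1) ^+ (m * c) * \prod_(i < m) ent (invmx UN) i i).
    move=> c m hc hm; rewrite tauB_conv //; last by lia.
    apply: solve_eq; first exact: sg.
      apply: (@prod_neq0 _ m (fun i => ent (invmx UN) i i)) => i hi. have hiN : (i < N)%N by lia. exact: (Vne0 G0 hiN).
    by rewrite (tauB_mk G0) // LR.
  case: b hb1 hbq hnb => [|c] // _ hcq hn.
  rewrite /= !TB //; try lia.
  have -> : mxn 0 (invmx (UB c.+1) *m Uf c) n n = ent (invmx (Uf c.+1) *m Uf c) n n by [].
  rewrite (Uprod (GR c.+1 hcq) (GR c (ltnW hcq))); last by lia.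
  rewrite !big_ord_recr /=.
  have nzV : forall c' i, (c' <= q)%N -> (i < N)%N -> ent (invmx (Uf c')) i i != 0.
    by move=> c' i hc' hi; apply: (Vne0 (GR c' hc')).
  have P1 := @prod_neq0 R n (fun i => ent (invmx (Uf c.+1)) i i) (fun i hi => nzV _ i hcq ltac:(lia)).
  have P2 := @prod_neq0 R n (fun i => ent (invmx (Uf c)) i i) (fun i hi => nzV _ i (ltnW hcq) ltac:(lia)).
  have P3 := @prod_neq0 R n (fun i => ent (invmx UN) i i) (fun i hi => @Vne0 R N M LN UN G0 i ltac:(lia)).
  have v1 := nzV _ n hcq ltac:(lia).
  have v2 := nzV _ n (ltnW hcq) ltac:(lia).
  have hh : (n < N)%N by lia.
  have v3 : ent (invmx UN) n n != 0 := Vne0 G0 hh.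
  rewrite !mulSn !exprD !exprS.
  have s1 := sg (n * c)%N; have s2 := sg (n * c.+1)%N; have s3 := sg c.
  field; rewrite ?s1 ?s2 ?s3 ?v1 ?v2 ?v3 ?P1 ?P2 ?P3 ?oppr_eq0 ?oner_eq0 ?mulf_neq0 //.
- move=> a n /andP[ha1 hap] hna.
  have TA : forall c m, (c <= p)%N -> (m + c <= N)%N ->
     tauA p UN c m = rho R c * ((-1) ^+ (m * c) * \prod_(i < m) ent (invmx (Uc c)) i i
                                * \prod_(i < m + c) ent UN i i).
    move=> c m hc hm; rewrite tauA_conv //; last by lia.
    by rewrite -(tauA_mk G0) // LC.
  case: a ha1 hap hna => [|c] // _ hcp hn.
  rewrite /= !TA //; try lia.
  have -> : mxn 0 (Lf c *m invmx (LA c.+1)) n.+1 n = ent (Lf c *m invmx (Lf c.+1)) n.+1 n by [].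
  have Hs : forall l k, (k <= n)%N -> ent (Mc c.+1) l k = ent (Mc c) l k.+1.
    move=> l k hk; rewrite /= (mom_col HI p0 q0); last by lia.
    case: (c) hcp hn => [|c'] hcp' hn' /=; first by rewrite add1n.
    by rewrite (mom_col HI p0 q0); [congr (ent _ _ _); lia | lia].
  rewrite (Lprod (GC c (ltnW hcp)) (GC c.+1 hcp)) //; last by lia.
  have e1 : (n.+2 + c = (n + c.+1).+1)%N by lia.
  have e2 : (n.+1 + c = n + c.+1)%N by lia.
  have e3 : (n.+1 + c.+1 = (n + c.+1).+1)%N by lia.
  rewrite e1 e2 e3 !big_ord_recr /=.
  have hnN : (n < N)%N by lia.
  have hn1N : (n.+1 < N)%N by lia.
  have hncN : (n + c.+1 < N)%N by lia.
  have x1 : ent (invmx (Uc c.+1)) n n != 0 := Vne0 (GC c.+1 hcp) hnN.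
  have x2 : ent (invmx (Uc c)) n n != 0 := Vne0 (GC c (ltnW hcp)) hnN.
  have x3 : ent (invmx (Uc c)) n.+1 n.+1 != 0 := Vne0 (GC c (ltnW hcp)) hn1N.
  have x4 : ent UN (n + c.+1) (n + c.+1) != 0 := Une0 G0 hncN.
  have uu : ent (Uc c.+1) n n = (ent (invmx (Uc c.+1)) n n)^-1.
    apply: (mulIf x1); rewrite mulVf //; exact: (UV (GC c.+1 hcp) hnN).
  have -> : ent (UA c.+1) n n = (ent (invmx (Uc c.+1)) n n)^-1 by exact: uu.
  have P1 := @prod_neq0 R n (fun i => ent (invmx (Uc c.+1)) i i) (fun i hi => @Vne0 R N _ _ _ (GC c.+1 hcp) i ltac:(lia)).
  have P2 := @prod_neq0 R n (fun i => ent (invmx (Uc c)) i i) (fun i hi => @Vne0 R N _ _ _ (GC c (ltnW hcp)) i ltac:(lia)).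
  have P3 := @prod_neq0 R (n + c.+1) (fun i => ent UN i i) (fun i hi => @Une0 R N _ _ _ G0 i ltac:(lia)).
  have r1 := rho_neq0 R c; have r2 := rho_neq0 R c.+1.
  rewrite !mulSn !exprD !exprS.
  have s1 := sg (n * c)%N; have s2 := sg (n * c.+1)%N; have s3 := sg c.
  field; rewrite ?s1 ?s2 ?s3 ?x1 ?x2 ?x3 ?x4 ?P1 ?P2 ?P3 ?r1 ?r2 ?oppr_eq0 ?oner_eq0 ?mulf_neq0 //.
Qed.
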